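(* Let $p$ be a prime and work in $F\otimes_{ku_*}ku_*(\mathbb{Z}_{p^2})$ with the notation of the context. Then for all integers $a,b$ and every integer $k\ge2$, $$ \begin{aligned} p^{k+1}[a,b] ={}& (-1)^k u_1^k\, p\, v^{kg_1}[a,b-kg_1] + (-1)^k u_1^{k-1} v^{(k-1)g_1+g_2}[a,b-(k-1)g_1-g_2]\\ &+\sum_{t=1}^{\lfloor k/2\rfloor}\Big( c_{k+1}(t)(-1)^{k+t}u_1^{k-2t}\,p\, v^{(k-2t)g_1+tg_2}[a,b-(k-2t)g_1-tg_2]\\ &\qquad\qquad + d_{k+1}(t)(-1)^{k+t}u_1^{k-2t-1} v^{(k-2t-1)g_1}v^{(t+1)g_2}[a,b-(k-2t-1)g_1-(t+1)g_2]\Big)\\ &+\Sigma_1+\Sigma_2+\Sigma_3, \end{aligned} $$ where $$\Sigma_1=\sum_{t=0}^{k-1}c_t\,p^{k-t-1}v^{tg_1}(A+B)^{[a,b-tg_1]},\qquad \Sigma_2=\sum_{t=1}^{\lfloor (k-1)/2\rfloor}c'_t\,p^{k-2t-1}v^{tg_2}(A+B)^{[a,b-tg_2]},$$ $$\Sigma_3=\sum_{r=1}^{\lfloor (k-2)/2\rfloor}\ \sum_{t=1}^{k-1-2r}c_{r,t}\,p^{k-2r-t-1}v^{rg_2+tg_1}(A+B)^{[a,b-rg_2-tg_1]}.$$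
   Context: Fix a prime $p$. Let $ku_*=\mathbb{Z}_{(p)}[v]$ ($p$-local connective $K$-theory coefficients, $v$ in degree 2). Put $g_1=p-1$, $g_2=p^2-1$. For $m\ge1$, $0\le t\le p^m-1$, let $a_{t,m}=\binom{p^m}{t+1}v^t$. The reduced $ku_*(\mathbb{Z}_{p^2})$ is the $ku_*$-module generated by $e_j$ ($j\ge1$) with relations $\sum_{t=0}^{p^2-1}a_{t,2}e_{j-t}=0$ for all $j\ge1$, $e_h=0$ for $h\le0$. Let $F$ be the free $ku_*$-module on $\alpha_i$, $i\ge1$ ($\alpha_h=0$ for $h\le0$), and $[i,j]=\alpha_i\otimes e_j\in F\otimes_{ku_*}ku_*(\mathbb{Z}_{p^2})$ (zero if $i\le0$ or $j\le0$). Define the unit $u_1\in\mathbb{Z}_{(p)}^\times$ by $\binom{p^2}{p}=u_1p$, so $a_{g_1,2}=u_1pv^{g_1}$. Convention: $v^s=0$ for $s<0$ (so e.g. $v^{(k-2t-1)g_1}v^{(t+1)g_2}=0$ if $k-2t-1<0$). For integers $a,b$ set $A^{[a,b]}=\sum_{i=1}^{p-2}\binom{p^2}{i+1}v^i[a,b-i]$, $B^{[a,b]}=\sum_{i=p}^{p^2-2}\binom{p^2}{i+1}v^i[a,b-i]$, $(A+B)^{[a,b]}=A^{[a,b]}+B^{[a,b]}$. Integers $c_k(t),d_k(t)$: $c_k(0)=d_k(0)=1$ for $k\ge2$; $c_2(t)=d_2(t)=0$ for $t\ge1$; for $k\ge3$, $t\ge1$: $c_k(t)=d_{k-1}(t-1)+c_{k-1}(t)$,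 $d_k(t)=c_{k-1}(t)$; and $c_k(t)=d_k(t)=0$ if $t<0$ or $k<2$. Finally $c_t=(-1)^{t+1}u_1^t$, $c'_t=(-1)^{t+1}c_{2t+1}(t)$, $c_{r,t}=(-1)^{t+r+1}u_1^t c_{t+2r+1}(r)$. $\lfloor\cdot\rfloor$ is the integer part. *)

(* Defs.v *)
From mathcomp Require Import all_boot all_order all_algebra.
Set Implicit Arguments. Unset Strict Implicit. Unset Printing Implicit Defensive.
Import Order.TTheory GRing.Theory Num.Theory.
Local Open Scope ring_scope.

(* Ground ring: ku_* = Z_(p)[v] is realised inside {poly rat} (v = 'X).
   q : rat lies in Z_(p) iff p does not divide its denominator. *)
Definition in_Zp (p : nat) (q : rat) : bool := ~~ (p%:Z %| denq q)%Z.
Definition in_kuZp (p : nat) (P : {poly rat}) : Prop :=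
  forall i : nat, in_Zp p (P`_i).

(* Elements of the free module on the symbols [i,j] (i,j integers; [i,j] = 0
   when i <= 0 or j <= 0), given by their coefficient at each (i,j). *)
Definition elt := int -> int -> {poly rat}.

Definition gen (a b : int) : elt :=
  fun i j => if [&& (0 < a)%R, (0 < b)%R, i == a & j == b] then 1 else 0.

Definition scl (c : {poly rat}) (x : elt) : elt := fun i j => c * x i j.
Definition eadd (x y : elt) : elt := fun i j => x i j + y i j.
Definition esum (I : Type) (r : seq I) (F : I -> elt) : elt :=
  fun i j => \sum_(t <- r) F t i j.

Definition vpow (s : int) : {poly rat} := if (s < 0)%R then 0 else 'X^(`|s|%N).

Definition g1 (p : nat) : int := (p%:Z - 1)%R.
Definition g2 (p : nat) : int := ((p%:Z) ^+ 2 - 1)%R.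

Definition acoef (p t : nat) : {poly rat} := ('C(p ^ 2, t.+1))%:R *: 'X^t.

(* the defining relation of ku_*(Z_{p^2}) tensored with alpha_i:
   sum_{t=0}^{p^2-1} a_{t,2} [i, j - t] *)
Definition relation (p : nat) (i j : int) : elt :=
  esum (iota 0 (p ^ 2)) (fun t => scl (acoef p t) (gen i (j - t%:Z))).

Definition Aelt (p : nat) (a b : int) : elt :=
  esum (iota 1 (p - 2)) (fun i => scl (acoef p i) (gen a (b - i%:Z))).
Definition Belt (p : nat) (a b : int) : elt :=
  esum (iota p (p ^ 2 - 1 - p)) (fun i => scl (acoef p i) (gen a (b - i%:Z))).
Definition ABelt (p : nat) (a b : int) : elt := eadd (Aelt p a b) (Belt p a b).

Definition u1 (p : nat) : rat := ('C(p ^ 2, p))%:R / p%:R.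

(* c_k(t), d_k(t) for t >= 0 (they vanish for t < 0, which never occurs below) *)
Fixpoint cd (k : nat) : nat -> int * int :=
  match k with
  | 0 => fun _ => (0, 0)
  | k'.+1 => fun t =>
      if k' is 0 then (0, 0)
      else if t is 0 then (1, 1)
      else if k' == 1%N then (0, 0)
      else ((cd k' t.-1).2 + (cd k' t).1, (cd k' t).1)
  end.
Definition ck (k t : nat) : int := (cd k t).1.
Definition dk (k t : nat) : int := (cd k t).2.

Definition c_ (p t : nat) : rat := (-1) ^+ t.+1 * u1 p ^+ t.
Definition c'_ (t : nat) : rat := (-1) ^+ t.+1 * (ck (2 * t).+1 t)%:~R.
Definition c_rt (p r t : nat) : rat :=
  (-1) ^+ (t + r).+1 * u1 p ^+ t * (ck (t + 2 * r).+1 r)%:~R.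

(* Main.v *)
Require Import Defs.
From mathcomp Require Import all_boot all_order all_algebra.
From mathcomp Require Import zify ring.
Import Order.TTheory GRing.Theory Num.Theory.
Local Open Scope ring_scope.

Lemma ck0 k : (2 <= k)%N -> ck k 0 = 1.
Proof. by case: k => [|[|k]]. Qed.
Lemma dk0 k : (2 <= k)%N -> dk k 0 = 1.
Proof. by case: k => [|[|k]]. Qed.
Lemma ckS k t : (3 <= k)%N -> ck k t.+1 = dk k.-1 t + ck k.-1 t.+1.
Proof. by case: k => [|[|[|k]]]. Qed.
Lemma dkS k t : (3 <= k)%N -> dk k t.+1 = ck k.-1 t.+1.
Proof. by case: k => [|[|[|k]]]. Qed.
Lemma ck2 t : ck 2 t.+1 = 0. Proof. by []. Qed.
Lemma ck_small k t : (k < 2)%N -> ck k t = 0.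
Proof. by case: k => [|[|k]]. Qed.
Lemma dk_small k t : (k < 2)%N -> dk k t = 0.
Proof. by case: k => [|[|k]]. Qed.

Lemma ck_van_aux n : forall k t, (k <= n)%N -> (k <= 2 * t)%N -> ck k t = 0.
Proof.
elim: n => [|n IH] k t hn h; first by have -> : k = 0%N by lia.
case: (ltnP k 2) => [/ck_small //|k2].
case: t h => [|t] h; first lia.
case: (ltnP k 3) => k3.
  by have -> : k = 2%N by lia.
rewrite ckS // (IH k.-1 t.+1) ?addr0; try lia.
case: t h => [|t] h; first lia.
case: (ltnP k.-1 3) => k3'.
  by have -> : k.-1 = 2%N by lia.
rewrite dkS // (IH _ t.+1) //; lia.
Qed.
Lemma ck_van k t : (k <= 2 * t)%N -> ck k t = 0.
Proof. exact: (@ck_van_aux k k t (leqnn k)). Qed.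

Lemma dk_van k t : (k <= 2 * t + 1)%N -> dk k t = 0.
Proof.
move=> h.
case: (ltnP k 2) => [/dk_small //|k2].
case: t h => [|t] h; first lia.
case: (ltnP k 3) => k3.
  have -> : k = 2%N by lia. by [].
rewrite dkS // ck_van //; lia.
Qed.

Lemma dkSc k t : (2 <= k)%N -> dk k.+1 t = ck k t.
Proof.
move=> k2; case: t => [|t]; first by rewrite dk0 ?ck0 //; lia.
by rewrite dkS.
Qed.

Lemma sum_trunc (R : nmodType) (F : nat -> R) a N M : (M <= N)%N ->
  (forall t, (a + M <= t < a + N)%N -> F t = 0) ->
  \sum_(t <- iota a N) F t = \sum_(t <- iota a M) F t.
Proof.
move=> MN h; rewrite -(subnKC MN) iotaD big_cat /= [X in _ + X]big1_seq ?addr0 //.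
move=> t /andP [_]; rewrite mem_iota => ht; apply: h; lia.
Qed.

Lemma eq_sum_iota (R : nmodType) (F G : nat -> R) a N :
  (forall t, (a <= t < a + N)%N -> F t = G t) ->
  \sum_(t <- iota a N) F t = \sum_(t <- iota a N) G t.
Proof. by move=> h; apply: eq_big_seq => t; rewrite mem_iota => /h. Qed.

Lemma sum_iota_shift (R : nmodType) (F : nat -> R) a N :
  \sum_(t <- iota a.+1 N) F t = \sum_(t <- iota a N) F t.+1.
Proof. by rewrite -addn1 addnC iotaDl big_map. Qed.

Lemma sum_iota_first (R : nmodType) (F : nat -> R) a N :
  \sum_(t <- iota a N.+1) F t = F a + \sum_(t <- iota a.+1 N) F t.
Proof. by rewrite big_cons. Qed.

Lemma sum_iota_last (R : nmodType) (F : nat -> R) a N :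
  \sum_(t <- iota a N.+1) F t = \sum_(t <- iota a N) F t + F (a + N)%N.
Proof. by rewrite -addn1 iotaD big_cat /= big_seq1. Qed.

Lemma ck_vanR (R : pzRingType) k t : (k <= 2 * t)%N -> (ck k t)%:~R = 0 :> R.
Proof. by move=> h; rewrite ck_van. Qed.
Lemma dk_vanR (R : pzRingType) k t : (k <= 2 * t + 1)%N -> (dk k t)%:~R = 0 :> R.
Proof. by move=> h; rewrite dk_van. Qed.

Lemma sign2 (R : pzRingType) r : (-1)^+(2*r) = 1 :> R.
Proof. by rewrite exprM sqrrN !expr1n. Qed.

Lemma sumW (R : pzSemiRingType) (I : Type) (r : seq I) (f : I -> R) W :
  \sum_(t <- r) f t * W = (\sum_(t <- r) f t) * W.
Proof. by rewrite big_distrl. Qed.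
Lemma sum2W (R : pzSemiRingType) (I J : Type) (r : seq I) (r2 : I -> seq J) (f : I -> J -> R) W :
  \sum_(x <- r) \sum_(y <- r2 x) f x y * W = (\sum_(x <- r) \sum_(y <- r2 x) f x y) * W.
Proof. by rewrite big_distrl; apply: eq_bigr => x _; rewrite big_distrl. Qed.
Lemma sumNW (R : pzRingType) (I : Type) (r : seq I) (f : I -> R) W :
  \sum_(t <- r) - f t * W = - ((\sum_(t <- r) f t) * W).
Proof. by rewrite big_distrl -sumrN; apply: eq_bigr => x _; rewrite mulNr. Qed.
Lemma sum2NW (R : pzRingType) (I J : Type) (r : seq I) (r2 : I -> seq J) (f : I -> J -> R) W :
  \sum_(x <- r) \sum_(y <- r2 x) - f x y * W = - ((\sum_(x <- r) \sum_(y <- r2 x) f x y) * W).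
Proof.
rewrite -mulNr -sumrN big_distrl; apply: eq_bigr => x _.
by rewrite -sumrN big_distrl.
Qed.

Section Abs.
Variables (R : comRingType) (P U X Y : R).

Definition aterm (i t : nat) : R :=
  (-1)^+(i+t) * (ck i.+1 t)%:~R * U^+(i - 2*t) * X^+(i-2*t) * Y^+t.
Definition bterm (i t : nat) : R :=
  (-1)^+(i+t) * (dk i.+1 t)%:~R * U^+(i-2*t-1) * X^+(i-2*t-1) * Y^+t.+1.
Definition alpha i := \sum_(t <- iota 0 i.+1) aterm i t.
Definition beta i := \sum_(t <- iota 0 i.+1) bterm i t.

Lemma alphaS i : (1 <= i)%N -> alpha i.+1 = beta i - U * X * alpha i.
Proof.
move=> i1.
pose a' s := (-1)^+(i+s) * (ck i.+1 s.+1)%:~R * U^+(i-2*s-1) * X^+(i-2*s-1) * Y^+s.+1.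
have e1 : forall s, aterm i.+1 s.+1 = bterm i s + a' s.
  move=> s; rewrite /a' /aterm /bterm ckS; last lia.
  rewrite (_ : (i.+1 - 2 * s.+1 = i - 2*s - 1)%N); last lia.
  rewrite addSn addnS !exprS /= intrD; ring.
have hA : alpha i.+1 = aterm i.+1 0 + beta i + \sum_(s <- iota 0 i.+1) a' s.
  rewrite /alpha sum_iota_first sum_iota_shift (eq_bigr _ (fun s _ => e1 s)).
  by rewrite big_split /= addrA.
have hB : alpha i = aterm i 0 + \sum_(s <- iota 0 i) aterm i s.+1.
  by rewrite /alpha sum_iota_first sum_iota_shift.
have hC : \sum_(s <- iota 0 i.+1) a' s = \sum_(s <- iota 0 i) a' s.
  apply: sum_trunc => // t ht; rewrite /a' ck_vanR ?mulr0 ?mul0r //; lia.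
have hD : \sum_(s <- iota 0 i) a' s = - (U * X * \sum_(s <- iota 0 i) aterm i s.+1).
  rewrite mulr_sumr -sumrN; apply: eq_sum_iota => s hs; rewrite /a' /aterm.
  case: (leqP (2 * s.+1) i) => hi.
    rewrite (_ : (i - 2*s - 1 = (i - 2 * s.+1).+1)%N); last lia.
    rewrite !exprS addnS exprS; ring.
  rewrite ck_vanR; last lia. by rewrite !mulr0 !mul0r ?mulr0 ?oppr0.
have hE : aterm i.+1 0 = - (U * X * aterm i 0).
  rewrite /aterm !addn0 !subn0 !ck0; try lia. rewrite !exprS; ring.
rewrite hA hC hD hB hE; ring.
Qed.

Lemma betaS i : (1 <= i)%N -> beta i.+1 = - Y * alpha i.
Proof.
move=> i1; rewrite /beta /alpha sum_iota_last add0n.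
rewrite /bterm dkSc; last lia.
rewrite ck_vanR; last lia. rewrite mulr0 mul0r mul0r mul0r addr0 mulr_sumr.
apply: eq_sum_iota => t ht; rewrite /aterm dkSc; last lia.
rewrite (_ : (i.+1 - 2*t - 1 = i - 2*t)%N); last lia.
rewrite addSn !exprS; ring.
Qed.

Definition S1 k := \sum_(t <- iota 0 k) (-1)^+t.+1 * U^+t * P^+(k - t - 1) * X^+t.
Definition g k r t := (-1)^+(t+r).+1 * U^+t * (ck (t + 2*r).+1 r)%:~R
   * P^+(k - 2*r - t - 1) * (Y^+r * X^+t).
Definition D k := \sum_(r <- iota 1 k) \sum_(t <- iota 0 (k - 2*r)) g k r t.
Definition rho k := S1 k + D k.

Lemma rhoS k : (1 <= k)%N -> rho k.+1 = P * rho k - alpha k.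
Proof.
move=> k1.
have hS1 : S1 k.+1 = P * S1 k + (-1)^+k.+1 * U^+k * X^+k.
  rewrite /S1 sum_iota_last add0n mulr_sumr.
  rewrite (_ : (k.+1 - k - 1 = 0)%N); last lia.
  congr (_ + _); last by rewrite expr0 mulr1.
  apply: eq_sum_iota => t ht.
  rewrite (_ : (k.+1 - t - 1 = (k - t - 1).+1)%N); last lia.
  rewrite !exprS; ring.
have eD : forall r, (1 <= r)%N ->
  \sum_(t <- iota 0 (k.+1 - 2 * r)) g k.+1 r t =
  P * \sum_(t <- iota 0 (k - 2 * r)) g k r t - aterm k r.
  move=> r r1; case: (leqP (2 * r) k) => hr.
    rewrite (_ : (k.+1 - 2*r = (k - 2*r).+1)%N); last lia.
    rewrite sum_iota_last add0n mulr_sumr.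
    congr (_ + _).
      apply: eq_sum_iota => t ht; rewrite /g.
      rewrite (_ : (k.+1 - 2*r - t - 1 = (k - 2*r - t - 1).+1)%N); last lia.
      rewrite !exprS; ring.
    rewrite /g /aterm.
    rewrite (_ : (k - 2*r + 2*r = k)%N); last lia.
    rewrite (_ : (k.+1 - 2 * r - (k - 2 * r) - 1 = 0)%N); last lia.
    have -> : ((-1) ^+ (k - 2 * r + r).+1 = - (-1) ^+ (k + r) :> R).
      rewrite (_ : (k + r = (k - 2*r + r) + 2 * r)%N); last lia.
      by rewrite exprS [in RHS]exprD sign2 mulr1 mulN1r.
    ring.
  rewrite (_ : (k.+1 - 2*r = 0)%N); last lia.
  rewrite (_ : (k - 2*r = 0)%N); last lia.
  rewrite /aterm ck_vanR; last lia.
  by rewrite !big_nil mulr0 !mulr0 !mul0r subr0.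
have hD : D k.+1 = P * D k - \sum_(r <- iota 1 k) aterm k r.
  rewrite /D sum_iota_last add1n.
  rewrite [X in _ + X]big1_seq; last first.
    by move=> t; rewrite (_ : (k.+1 - 2 * k.+1 = 0)%N) //; lia.
  rewrite addr0 mulr_sumr -sumrB.
  by apply: eq_sum_iota => r hr; apply: eD; lia.
have hal : alpha k = aterm k 0 + \sum_(r <- iota 1 k) aterm k r.
  by rewrite /alpha sum_iota_first.
have hat : aterm k 0 = (-1)^+k * U^+k * X^+k.
  rewrite /aterm addn0 subn0 ck0; last lia. by rewrite expr0 !mulr1.
rewrite /rho hS1 hD hal hat exprS; ring.
Qed.

Definition F := P^+2 + U * P * X + Y.

Lemma main_rec k : (1 <= k)%N -> P^+k.+1 + rho k * F = P * alpha k + beta k.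
Proof.
elim: k => [//|k IH] _.
case: (ltnP k 1) => k1.
  have -> : k = 0%N by lia.
  rewrite /rho /S1 /D /alpha /beta /aterm /bterm /F /ck /dk /=.
  rewrite !big_cons !big_nil /=. ring.
rewrite rhoS // alphaS // betaS //.
rewrite exprS.
have := IH k1 => h.
rewrite (_ : P * P ^+ k.+1 = P * (P ^+ k.+1 + rho k * F) - P * rho k * F); last ring.
rewrite h /F; ring.
Qed.

Definition R0S k := (-1)^+k * U^+k * P * X^+k + ((-1)^+k * U^+k.-1 * (X^+k.-1 * Y) +
  \sum_(t <- iota 1 k./2) ((ck k.+1 t)%:~R * (-1)^+(k+t) * U^+(k - 2*t) * P * (X^+(k-2*t) * Y^+t)
     + (dk k.+1 t)%:~R * (-1)^+(k+t) * U^+(k-2*t-1) * (X^+(k-2*t-1) * Y^+t.+1))).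

Lemma R0_eq k : (2 <= k)%N -> R0S k = P * alpha k + beta k.
Proof.
move=> k2; rewrite /alpha /beta mulr_sumr -big_split /=.
rewrite sum_iota_first (@sum_trunc _ _ _ k k./2); last first.
- move=> t ht; rewrite /aterm /bterm ck_vanR ?dk_vanR; try lia.
  by rewrite !mulr0 !mul0r mulr0 add0r.
- lia.
rewrite /R0S addrA; congr (_ + _).
  rewrite /aterm /bterm addn0 !subn0 ck0 ?dk0; try lia.
  rewrite subn1 !mulr1 expr1; ring.
apply: eq_sum_iota => t ht; rewrite /aterm /bterm; ring.
Qed.

Definition S2 k := \sum_(t <- iota 1 (k.-1)./2)
   (-1)^+t.+1 * (ck (2*t).+1 t)%:~R * P^+(k - 2*t - 1) * Y^+t.
Definition S3 k := \sum_(r <- iota 1 (k - 2)./2) \sum_(t <- iota 1 (k - 1 - 2*r)) g k r t.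

Lemma fold_eq k : S2 k + S3 k = D k.
Proof.
pose e r := if (2 * r < k)%N then g k r 0 else 0.
have h1 : D k = \sum_(r <- iota 1 k) (e r + \sum_(t <- iota 1 (k - 1 - 2*r)) g k r t).
  apply: eq_sum_iota => r hr; rewrite /e; case: ifP => hk.
    rewrite (_ : (k - 2*r = (k - 1 - 2*r).+1)%N); last lia.
    by rewrite sum_iota_first.
  rewrite (_ : (k - 2*r = 0)%N); last lia.
  rewrite (_ : (k - 1 - 2*r = 0)%N); last lia.
  by rewrite !big_nil addr0.
rewrite h1 big_split /=.
rewrite (@sum_trunc _ _ _ k (k.-1)./2); last first.
- move=> t ht; rewrite /e ifF //; lia.
- lia.
rewrite [X in _ = _ + X](@sum_trunc _ _ _ k (k - 2)./2); last first.
- move=> t ht; rewrite (_ : (k - 1 - 2 * t = 0)%N) ?big_nil //; lia.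
- lia.
rewrite /S3; congr (_ + _).
apply: eq_sum_iota => r hr; rewrite /e ifT; last lia.
rewrite /g !add0n subn0 expr0 expr0 !mulr1; ring.
Qed.

Lemma abs_main k : (2 <= k)%N ->
  P^+k.+1 + (S1 k + (S2 k + S3 k)) * F = R0S k.
Proof.
move=> k2; rewrite fold_eq R0_eq // -main_rec //; lia.
Qed.

Definition s0term k t := (ck k.+1 t)%:~R * (-1)^+(k+t) * U^+(k - 2*t) * P * (X^+(k-2*t) * Y^+t)
     + (dk k.+1 t)%:~R * (-1)^+(k+t) * U^+(k-2*t-1) * (X^+(k-2*t-1) * Y^+t.+1).
Definition s1t k t := (-1)^+t.+1 * U^+t * P^+(k - t - 1) * X^+t.
Definition s2t k t := (-1)^+t.+1 * (ck (2*t).+1 t)%:~R * P^+(k - 2*t - 1) * Y^+t.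

Lemma abs_final (W : R) k : (2 <= k)%N ->
  P^+k.+1 = (-1)^+k * U^+k * P * X^+k + ((-1)^+k * U^+k.-1 * (X^+k.-1 * Y) +
   (\sum_(t <- iota 1 k./2) s0term k t +
   (\sum_(t <- iota 0 k) s1t k t * W +
   (\sum_(t <- iota 1 (k.-1)./2) s2t k t * W +
    \sum_(r <- iota 1 (k - 2)./2) \sum_(t <- iota 1 (k - 1 - 2*r)) g k r t * W)))) +
   (\sum_(t <- iota 0 k) - s1t k t * (F + W) +
   (\sum_(t <- iota 1 (k.-1)./2) - s2t k t * (F + W) +
    \sum_(r <- iota 1 (k - 2)./2) \sum_(t <- iota 1 (k - 1 - 2*r)) - g k r t * (F + W))).
Proof.
move=> k2; have h := abs_main k k2.
rewrite /R0S /S1 /S2 /S3 /F in h.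
rewrite !sum2NW !sumNW !sum2W !sumW.
rewrite /s0term /s1t /s2t /F.
set A1 := \sum_(t <- iota 0 k) _.
set A2 := \sum_(t <- iota 1 (k.-1)./2) _.
set A3 := \sum_(r <- iota 1 (k - 2)./2) _.
set A0 := \sum_(t <- iota 1 k./2) _.
move: h; rewrite -/A1 -/A2 -/A3 -/A0 => h.
transitivity (P ^+ k.+1 + (A1 + (A2 + A3)) * (P ^+ 2 + U * P * X + Y)
   - (A1 + (A2 + A3)) * (P ^+ 2 + U * P * X + Y)); first ring.
rewrite h; ring.
Qed.
End Abs.

Definition coef_at (Q : {poly rat}) (m : int) : rat :=
  if (m < 0)%R then 0 else Q`_`|m|%N.
Definition Phi (a c : int) (Q : {poly rat}) : elt := fun i j =>
  if [&& (0 < a)%R, i == a & (0 < j)%R] then coef_at Q (c - j) *: vpow (c - j) else 0.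

Lemma vpow_nat (n : nat) : vpow n%:Z = 'X^n.
Proof. by []. Qed.
Lemma vpow_neg (x : int) : (x < 0)%R -> vpow x = 0.
Proof. by rewrite /vpow => ->. Qed.

Lemma coef_atD Q1 Q2 m : coef_at (Q1 + Q2) m = coef_at Q1 m + coef_at Q2 m.
Proof. by rewrite /coef_at; case: ifP; rewrite ?addr0 ?coefD. Qed.

Lemma Phi_add a c Q1 Q2 i j : Phi a c (Q1 + Q2) i j = Phi a c Q1 i j + Phi a c Q2 i j.
Proof. by rewrite /Phi; case: ifP; rewrite ?addr0 // coef_atD scalerDl. Qed.

Lemma Phi0 a c i j : Phi a c 0 i j = 0.
Proof. by rewrite /Phi /coef_at; case: ifP => //; case: ifP; rewrite ?coef0 scale0r. Qed.

Lemma Phi_sum (I : Type) (r : seq I) (F : I -> {poly rat}) a c i j :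
  \sum_(x <- r) Phi a c (F x) i j = Phi a c (\sum_(x <- r) F x) i j.
Proof.
elim: r => [|x r IH]; first by rewrite !big_nil Phi0.
by rewrite !big_cons IH Phi_add.
Qed.

Lemma gen_Phi a c i j : gen a c i j = Phi a c 1 i j.
Proof.
rewrite /gen /Phi /coef_at.
case Ha: (0 < a)%R => //=.
case Hi: (i == a); last by rewrite /= !andbF.
case Hj: (0 < j)%R => /=.
  case: (ltrP (c - j) 0) => hm.
    have -> : (j == c) = false by apply/eqP; lia.
    by rewrite !andbF scale0r.
  case: (eqVneq j c) => [<-|hne].
    rewrite Hj subrr /= -[1 in RHS]polyC1 coefC /= scale1r; by [].
  rewrite andbF -polyC1 coefC (_ : (`|c - j|%N == 0%N) = false) ?scale0r //.
  apply/negP => /eqP h; move/eqP: hne; apply; lia.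
case: (eqVneq j c) => [hjc|]; last by rewrite !andbF.
by move: Hj; rewrite hjc => ->.
Qed.

Lemma shift_core (r : rat) (n : nat) (Q : {poly rat}) (m : int) :
  coef_at (r *: 'X^n * Q) (m + n%:Z) *: vpow (m + n%:Z) =
  (r *: 'X^n) * (coef_at Q m *: vpow m).
Proof.
rewrite /coef_at; case: m => m.
  rewrite -PoszD /= vpow_nat -scalerAl coefZ coefXnM ifF; last lia.
  by rewrite addnK vpow_nat -scalerAr -scalerAl scalerA [Q`_m * r]mulrC -exprD addnC.
rewrite (_ : (Negz m < 0)%R = true) //= scale0r mulr0.
case: ifP => h; first by rewrite scale0r.
rewrite -scalerAl coefZ coefXnM ifT ?mulr0 ?scale0r //.
move: h; rewrite NegzE; lia.
Qed.

Lemma shift_Phi a c (r : rat) (n : int) Q i j : (0 <= n)%R ->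
  r *: vpow n * Phi a c Q i j = Phi a (c + n) (r *: vpow n * Q) i j.
Proof.
case: n => // n _; rewrite /Phi vpow_nat; case: ifP => _; last by rewrite mulr0.
by rewrite (_ : c + n - j = (c - j) + n); [rewrite shift_core | ring].
Qed.

Lemma term_gen a b c (r : rat) (n : int) i j : (0 <= n)%R -> c + n = b ->
  scl (r *: vpow n) (gen a c) i j = Phi a b (r *: vpow n) i j.
Proof. by move=> hn <-; rewrite /scl gen_Phi shift_Phi // mulr1. Qed.

Lemma vpowD (x y : int) : (0 <= x)%R -> (0 <= y)%R -> vpow (x + y) = vpow x * vpow y.
Proof. by case: x => // x _; case: y => // y _; rewrite -PoszD !vpow_nat exprD. Qed.

Lemma term_gen2 a b c r (A B : int) i j : (0 <= B)%R -> c + A + B = b ->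
  scl (r *: (vpow A * vpow B)) (gen a c) i j = Phi a b (r *: (vpow A * vpow B)) i j.
Proof.
move=> hB hb; case: (ltrP A 0) => hA.
  by rewrite vpow_neg // mul0r scaler0 /scl mul0r Phi0.
rewrite -vpowD //; apply: term_gen; [exact: addr_ge0 | by rewrite addrA].
Qed.

Lemma esum_acoef_Phi p a c (r : seq nat) i j :
  esum r (fun t => scl (acoef p t) (gen a (c - t%:Z))) i j =
  Phi a c (\sum_(t <- r) acoef p t) i j.
Proof.
rewrite /esum -Phi_sum; apply: eq_bigr => t _; rewrite /acoef -vpow_nat.
by apply: term_gen => //; rewrite subrK.
Qed.

Definition ABz p := \sum_(t <- iota 1 (p-2)) acoef p t +
  \sum_(t <- iota p (p^2-1-p)) acoef p t.
Definition fz p := \sum_(t <- iota 0 (p^2)) acoef p t.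

Lemma ABelt_Phi p a c i j : ABelt p a c i j = Phi a c (ABz p) i j.
Proof. by rewrite /ABelt /eadd /Aelt /Belt !esum_acoef_Phi Phi_add. Qed.
Lemma relation_Phi p a c i j : relation p a c i j = Phi a c (fz p) i j.
Proof. by rewrite /relation esum_acoef_Phi. Qed.

Lemma term_AB p a b c (r : rat) (n : int) i j : (0 <= n)%R -> c + n = b ->
  scl (r *: vpow n) (ABelt p a c) i j = Phi a b (r *: vpow n * ABz p) i j.
Proof. by move=> hn <-; rewrite /scl ABelt_Phi shift_Phi. Qed.

Lemma term_rel p a b c (r : rat) (n : int) i j : (0 <= n)%R -> c + n = b ->
  (r *: vpow n) * relation p a c i j = Phi a b (r *: vpow n * fz p) i j.
Proof. by move=> hn <-; rewrite relation_Phi shift_Phi. Qed.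

Lemma p2_ge p : (2 <= p)%N -> (p + 1 <= p ^ 2)%N.
Proof. move=> h; rewrite expnS expn1; nia. Qed.

Lemma fz_split p : (2 <= p)%N ->
  fz p = (p%:R : rat)%:P ^+ 2 + (u1 p)%:P * (p%:R : rat)%:P * vpow (g1 p) + vpow (g2 p) + ABz p.
Proof.
move=> p2; have h2 := @p2_ge p p2.
rewrite /fz /ABz [in iota 0 _](_ : (p^2 = (p-2).+1 + (1 + ((p^2-1-p) + 1)))%N); last lia.
rewrite iotaD big_cat sum_iota_first add0n iotaD big_cat iotaD big_cat /=.
rewrite !big_cons !big_nil !addr0.
rewrite (_ : ((p - 2).+1 + 1 = p)%N); last lia.
rewrite (_ : (p + (p ^ 2 - 1 - p) = p^2 - 1)%N); last lia.
rewrite (_ : ((p - 2).+1 = p - 1)%N); last lia.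
rewrite (_ : (g1 p = (p - 1)%N%:Z)); last by rewrite /g1; lia.
rewrite (_ : (g2 p = (p^2 - 1)%N%:Z)); last by rewrite /g2; lia.
rewrite !vpow_nat /acoef bin1 expr0 (_ : ((p - 1).+1 = p)%N); last lia.
rewrite (_ : ((p ^ 2 - 1).+1 = p^2)%N); last lia.
rewrite binn scale1r.
have hu : ('C(p ^ 2, p)%:R : rat) = u1 p * p%:R.
  rewrite /u1 mulfVK // pnatr_eq0; lia.
rewrite hu -!mul_polyC mulr1 natrX rmorphXn rmorphM /=; ring.
Qed.

Lemma inZp_int p r : prime p -> r \is a Num.int -> in_Zp p r.
Proof.
move=> pp; rewrite /in_Zp Qint_def => /eqP ->; rewrite dvdz1 /=.
by apply/negP => /eqP h; move: pp; rewrite h.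
Qed.

Lemma inku_scal p (r : rat) (n : int) : prime p -> r \is a Num.int ->
  in_kuZp p (r *: vpow n).
Proof.
move=> pp hr i; apply: inZp_int => //; rewrite coefZ rpredM //.
rewrite /vpow; case: ifP => _; first by rewrite coef0 rpred0.
by rewrite coefXn natr_int.
Qed.

Lemma vpow_mulz (n : nat) (x : int) : (0 <= x)%R -> vpow (n%:Z * x) = vpow x ^+ n.
Proof. by case: x => // x _; rewrite -PoszM !vpow_nat -exprM mulnC. Qed.

Lemma u1_int p : prime p -> u1 p \is a Num.int.
Proof.
move=> pp; have p1 := prime_gt1 pp.
have h := mul_bin_diag (p ^ 2) (p - 1).
have e : 'C(p ^ 2, p) = (p * 'C((p ^ 2).-1, p - 1))%N.
  apply/eqP; rewrite -(@eqn_pmul2l p) ?(ltn_trans _ p1) //.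
  rewrite mulnA (_ : (p * p = p ^ 2)%N); last by rewrite expnS expn1.
  rewrite h (_ : ((p - 1).+1 = p)%N) //; lia.
rewrite /u1 e natrM mulrC mulKf ?natr_int //; rewrite pnatr_eq0; lia.
Qed.

Lemma Phi_eq a b Q1 Q2 i j : Q1 = Q2 -> Phi a b Q1 i j = Phi a b Q2 i j.
Proof. by move=> ->. Qed.

Theorem theorem4p2 (p : nat) (hp : prime p) (a b : int) (k : nat) (hk : (2 <= k)%N) :
  let P : rat := p%:R in
  let G1 := g1 p in
  let G2 := g2 p in
  let u := u1 p in
  let kz : int := k%:Z in
  let LHS : elt := scl ((P ^+ k.+1) %:P) (gen a b) in
  let T1 : elt := scl (((-1) ^+ k * u ^+ k * P) *: vpow (kz * G1))
                      (gen a (b - kz * G1)) in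
  let T2 : elt := scl (((-1) ^+ k * u ^+ k.-1) *: vpow ((kz - 1) * G1 + G2))
                      (gen a (b - (kz - 1) * G1 - G2)) in
  let S0 : elt := esum (iota 1 k./2) (fun t =>
      let tz : int := t%:Z in
      eadd
        (scl (((ck k.+1 t)%:~R * (-1) ^+ (k + t) * u ^+ (k - 2 * t) * P)
                *: vpow ((kz - 2 * tz) * G1 + tz * G2))
             (gen a (b - (kz - 2 * tz) * G1 - tz * G2)))
        (scl (((dk k.+1 t)%:~R * (-1) ^+ (k + t) * u ^ (kz - 2 * tz - 1))
                *: (vpow ((kz - 2 * tz - 1) * G1) * vpow ((tz + 1) * G2)))
             (gen a (b - (kz - 2 * tz - 1) * G1 - (tz + 1) * G2)))) in
  let S1 : elt := esum (iota 0 k) (fun t =>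
      scl ((c_ p t * P ^+ (k - t - 1)) *: vpow (t%:Z * G1))
          (ABelt p a (b - t%:Z * G1))) in
  let S2 : elt := esum (iota 1 (k.-1)./2) (fun t =>
      scl ((c'_ t * P ^+ (k - 2 * t - 1)) *: vpow (t%:Z * G2))
          (ABelt p a (b - t%:Z * G2))) in
  let S3 : elt := esum (iota 1 (k - 2)./2) (fun r =>
      esum (iota 1 (k - 1 - 2 * r)) (fun t =>
        scl ((c_rt p r t * P ^+ (k - 2 * r - t - 1))
               *: vpow (r%:Z * G2 + t%:Z * G1))
            (ABelt p a (b - r%:Z * G2 - t%:Z * G1)))) in
  let RHS : elt := eadd T1 (eadd T2 (eadd S0 (eadd S1 (eadd S2 S3)))) in
  (* equality in F (x)_{ku_*} ku_*(Z_{p^2}): the difference lies in the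
     Z_(p)[v]-span of the relations *)
  exists s : seq ({poly rat} * (int * int)),
    (forall x, x \in s -> in_kuZp p x.1) /\
    forall i j : int,
      LHS i j = RHS i j + \sum_(x <- s) x.1 * relation p x.2.1 x.2.2 i j.
Proof.
move=> P G1 G2 u kz LHS T1 T2 S0 S1 S2 S3 RHS.
have p2 : (2 <= p)%N := prime_gt1 hp.
have hp2 := @p2_ge p p2.
have hG1 : G1 = (p - 1)%N%:Z by rewrite /G1 /g1; lia.
have hG2 : G2 = (p ^ 2 - 1)%N%:Z by rewrite /G2 /g2; lia.
have G1p : (0 <= G1)%R by rewrite hG1.
have G2p : (0 <= G2)%R by rewrite hG2.
have G1pos : (0 < G1)%R by rewrite hG1; lia.
pose PP := P%:P; pose UU := u%:P; pose XX := vpow G1; pose YY := vpow G2.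
pose s0 := [seq (- (c_ p t * P ^+ (k - t - 1)), t%:Z * G1) | t <- iota 0 k] ++
  ([seq (- (c'_ t * P ^+ (k - 2 * t - 1)), t%:Z * G2) | t <- iota 1 (k.-1)./2] ++
   flatten [seq [seq (- (c_rt p r t * P ^+ (k - 2 * r - t - 1)), r%:Z * G2 + t%:Z * G1)
     | t <- iota 1 (k - 1 - 2 * r)] | r <- iota 1 (k - 2)./2]).
exists [seq (x.1 *: vpow x.2, (a, b - x.2)) | x <- s0]; split.
  have hint : forall q : rat, q \is a Num.int -> q \is a Num.int by [].
  move=> x /mapP [y hy ->] /=; apply: inku_scal => //.
  move: hy; rewrite !mem_cat => /or3P [] hy.
  - case/mapP: hy => t _ ->; rewrite /= /c_ /P /u.
    by repeat (first [ apply: u1_int | apply: natr_int | apply: intr_int | apply: rpredM | apply: rpredX | rewrite rpredN | apply: rpred1 ]).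
  - case/mapP: hy => t _ ->; rewrite /= /c'_ /P /u.
    by repeat (first [ apply: u1_int | apply: natr_int | apply: intr_int | apply: rpredM | apply: rpredX | rewrite rpredN | apply: rpred1 ]).
  - case/flattenP: hy => l /mapP [r _ ->] /mapP [t _ ->]; rewrite /= /c_rt /P /u.
    by repeat (first [ apply: u1_int | apply: natr_int | apply: intr_int | apply: rpredM | apply: rpredX | rewrite rpredN | apply: rpred1 ]).
have kpos : (0 <= kz - 1)%R by rewrite /kz; lia.
have conv1 : forall t : nat, (c_ p t * P ^+ (k - t - 1)) *: vpow (t%:Z * G1) = s1t _ PP UU XX k t.
  move=> t; rewrite /s1t /c_ vpow_mulz // -mul_polyC 2!rmorphM /= 3!rmorphXn /= rmorphN1.
  by [].
have conv2 : forall t : nat, (c'_ t * P ^+ (k - 2 * t - 1)) *: vpow (t%:Z * G2) = s2t _ PP YY k t.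
  move=> t; rewrite /s2t /c'_ vpow_mulz // -mul_polyC 2!rmorphM /= 2!rmorphXn /= rmorphN1 rmorph_int.
  by [].
have conv3 : forall r t : nat, (c_rt p r t * P ^+ (k - 2 * r - t - 1)) *: vpow (r%:Z * G2 + t%:Z * G1)
    = g _ PP UU XX YY k r t.
  move=> r t; rewrite /g /c_rt vpowD ?mulr_ge0 // !vpow_mulz //.
  rewrite -mul_polyC 3!rmorphM /= 3!rmorphXn /= rmorphN1 rmorph_int.
  by [].
move=> i j.
have eL : LHS i j = Phi a b (PP ^+ k.+1) i j.
  rewrite /LHS (_ : (P ^+ k.+1)%:P = P ^+ k.+1 *: vpow 0); last first.
    by rewrite /vpow /= expr0 alg_polyC.
  rewrite (term_gen a b) ?addr0 //; apply: Phi_eq.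
  by rewrite /vpow /= expr0 alg_polyC rmorphXn.
have eT1 : T1 i j = Phi a b ((-1)^+k * UU^+k * PP * XX^+k) i j.
  rewrite /T1 (term_gen a b); last by rewrite subrK.
    apply: Phi_eq; rewrite /kz vpow_mulz // -mul_polyC 2!rmorphM /= 2!rmorphXn /= rmorphN1.
    by [].
  by rewrite mulr_ge0.
have eT2 : T2 i j = Phi a b ((-1)^+k * UU^+k.-1 * (XX^+k.-1 * YY)) i j.
  rewrite /T2 (term_gen a b); last by ring.
    apply: Phi_eq; rewrite (_ : kz - 1 = (k.-1)%N%:Z); last by rewrite /kz; lia.
    rewrite vpowD ?mulr_ge0 // vpow_mulz // -mul_polyC 1!rmorphM /= 2!rmorphXn /= rmorphN1.
    by [].
  by rewrite addr_ge0 // mulr_ge0.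
have eS0 : S0 i j = Phi a b (\sum_(t <- iota 1 k./2) s0term _ PP UU XX YY k t) i j.
  rewrite /S0 /esum -Phi_sum; apply: eq_sum_iota => t ht /=.
  rewrite /eadd /s0term Phi_add; congr (_ + _).
    rewrite (term_gen a b); last by ring.
      apply: Phi_eq; rewrite (_ : kz - 2 * t%:Z = (k - 2 * t)%N%:Z); last by rewrite /kz; lia.
      rewrite vpowD ?mulr_ge0 // !vpow_mulz //.
      rewrite -mul_polyC 3!rmorphM /= 2!rmorphXn /= rmorphN1 rmorph_int.
      by [].
    rewrite addr_ge0 // mulr_ge0 //; rewrite /kz; lia.
  rewrite (term_gen2 a b); last by ring.
    apply: Phi_eq; case: (leqP (2 * t + 1) k) => hkt.
      rewrite (_ : kz - 2 * t%:Z - 1 = (k - 2 * t - 1)%N%:Z); last by rewrite /kz; lia.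
      rewrite (_ : t%:Z + 1 = (t.+1)%N%:Z); last lia.
      rewrite -exprnP !vpow_mulz //.
      rewrite -mul_polyC 2!rmorphM /= 2!rmorphXn /= rmorphN1 rmorph_int.
      by [].
    rewrite dk_van; last lia.
    by rewrite mulr0z !mul0r scale0r.
  by rewrite mulr_ge0 // addr_ge0.
have eS1 : S1 i j = Phi a b (\sum_(t <- iota 0 k) s1t _ PP UU XX k t * ABz p) i j.
  rewrite /S1 /esum -Phi_sum; apply: eq_bigr => t _.
  rewrite (term_AB p a b); [by rewrite conv1 | by rewrite mulr_ge0 | by rewrite subrK].
have eS2 : S2 i j = Phi a b (\sum_(t <- iota 1 (k.-1)./2) s2t _ PP YY k t * ABz p) i j.
  rewrite /S2 /esum -Phi_sum; apply: eq_bigr => t _.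
  rewrite (term_AB p a b); [by rewrite conv2 | by rewrite mulr_ge0 | by rewrite subrK].
have eS3 : S3 i j = Phi a b (\sum_(r <- iota 1 (k - 2)./2)
    \sum_(t <- iota 1 (k - 1 - 2 * r)) g _ PP UU XX YY k r t * ABz p) i j.
  rewrite /S3 /esum -Phi_sum; apply: eq_bigr => r _.
  rewrite -Phi_sum; apply: eq_bigr => t _.
  rewrite (term_AB p a b); [by rewrite conv3 | by rewrite addr_ge0 // mulr_ge0 | by ring].
have eSig : \sum_(x <- [seq (x.1 *: vpow x.2, (a, b - x.2)) | x <- s0])
    x.1 * relation p x.2.1 x.2.2 i j =
  Phi a b (\sum_(t <- iota 0 k) - s1t _ PP UU XX k t * fz p +
   (\sum_(t <- iota 1 (k.-1)./2) - s2t _ PP YY k t * fz p +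
    \sum_(r <- iota 1 (k - 2)./2) \sum_(t <- iota 1 (k - 1 - 2 * r))
       - g _ PP UU XX YY k r t * fz p)) i j.
  rewrite big_map /s0 !big_cat /= !Phi_add; congr (_ + (_ + _)).
  - rewrite big_map -Phi_sum; apply: eq_bigr => t _ /=.
    rewrite (term_rel p a b); [by rewrite scaleNr conv1 | by rewrite mulr_ge0 | by rewrite subrK].
  - rewrite big_map -Phi_sum; apply: eq_bigr => t _ /=.
    rewrite (term_rel p a b); [by rewrite scaleNr conv2 | by rewrite mulr_ge0 | by rewrite subrK].
  - rewrite big_flatten big_map -Phi_sum; apply: eq_bigr => r _ /=.
    rewrite big_map -Phi_sum; apply: eq_bigr => t _ /=.
    rewrite (term_rel p a b); [by rewrite scaleNr conv3 | by rewrite addr_ge0 // mulr_ge0 | by ring].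
rewrite eL /RHS /eadd eT1 eT2 eS0 eS1 eS2 eS3 eSig -!Phi_add; apply: Phi_eq.
rewrite fz_split //.
exact: abs_final.
Qed.
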